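(* Let $n\in\mathbb{N}$ with $n\ge2$ and $I_n:=\int_{(0,\infty)^n}\mathrm{d}u\,\frac{|u|_1e^{-|u|_1}}{\prod_{j=1}^n(u_j+u_{j+1})}$, where $u_{n+1}:=u_1$ and $|u|_1:=u_1+\dots+u_n$. Then \[ I_n=\frac n2\int_{(0,\infty)^n}\mathrm{d}u\,\frac{e^{-|u|_1}}{\prod_{j=1}^{n-1}(u_j+u_{j+1})}. \] *)

(* Defs.v *)
From HB Require Import structures.
From mathcomp Require Import all_boot all_order all_algebra.
From mathcomp Require Import all_classical all_reals all_analysis.
Set Implicit Arguments. Unset Strict Implicit. Unset Printing Implicit Defensive.
Import Order.TTheory GRing.Theory Num.Theory.
Local Open Scope classical_set_scope.
Local Open Scope ring_scope.

(* [iint_pos n f] is the integral of f : R^n -> [0,+oo] over (0,oo)^n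
   w.r.t. n-dimensional Lebesgue measure, written as the iterated Lebesgue
   integral (equal to the product-measure integral for nonnegative
   measurable integrands by Tonelli).  A point u of R^n is represented by
   the sequence [:: u_1; ...; u_n] (so u_{j+1} = nth 0 u j). *)
Fixpoint iint_pos (R : realType) (n : nat) (f : seq R -> \bar R) : \bar R :=
  match n with
  | 0 => f [::]
  | m.+1 => (\int[@lebesgue_measure R]_(x in `]0%R, +oo[) iint_pos m (fun s => f (x :: s)))%E
  end.

Definition l1 (R : realType) (n : nat) (u : seq R) : R :=
  \sum_(j < n) nth 0 u j.

Definition cyc_prod (R : realType) (n : nat) (u : seq R) : R :=
  \prod_(j < n) (nth 0 u j + nth 0 u ((j.+1) %% n)).

Definition path_prod (R : realType) (n : nat) (u : seq R) : R :=
  \prod_(j < n.-1) (nth 0 u j + nth 0 u j.+1).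

Definition In_integrand (R : realType) (n : nat) (u : seq R) : \bar R :=
  ((l1 n u * expR (- l1 n u)) / cyc_prod n u)%:E.

Definition rhs_integrand (R : realType) (n : nat) (u : seq R) : \bar R :=
  (expR (- l1 n u) / path_prod n u)%:E.

(* Main.v *)
Require Import Defs.
From HB Require Import structures.
From mathcomp Require Import all_boot all_order all_algebra.
From mathcomp Require Import all_classical all_reals all_analysis.
From mathcomp Require Import measurable_realfun.
From mathcomp Require Import ring.
Import Order.TTheory GRing.Theory Num.Theory.
Local Open Scope classical_set_scope.
Local Open Scope ring_scope.

Section Infra.
Variable R : realType.
Local Notation RR := (measurableTypeR R).
Local Notation mu := (@lebesgue_measure R).
Local Notation D := (`]0%R, +oo[%classic : set RR).

Fixpoint PT (n : nat) : {d : measure_display & measurableType d} :=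
  match n with
  | 0 => existT _ _ (unit : measurableType _)
  | m.+1 => existT _ _ ((RR * projT2 (PT m))%type : measurableType _)
  end.
Definition P n : measurableType _ := projT2 (PT n).

Fixpoint fl (n : nat) : seq R -> P n :=
  match n return seq R -> P n with
  | 0 => fun _ => tt
  | m.+1 => fun s => ((head 0 s : RR), fl m (behead s))
  end.

Definition K n (F : P n -> \bar R) := iint_pos n (fun s => F (fl n s)).
Arguments K {n} F.

Lemma KS m (F : P m.+1 -> \bar R) :
  K F = (\int[mu]_(x in D) K (fun p : P m => F ((x, p) : P m.+1)))%E.
Proof. by []. Qed.

Lemma K0E (F : P 0 -> \bar R) : K F = F tt.
Proof. by []. Qed.

Lemma mD : measurable D.
Proof. exact: measurable_itv. Qed.

Lemma K_ge0 n (F : P n -> \bar R) : (forall p, 0 <= F p)%E -> (0 <= K F)%E.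
Proof.
elim: n F => [|m IH] F F0; first by rewrite K0E.
rewrite KS; apply: integral_ge0 => x _; apply: IH => p; exact: F0.
Qed.

Lemma Kmeas n d (Q : measurableType d) (F : (Q * P n)%type -> \bar R) :
  measurable_fun setT F -> (forall z, 0 <= F z)%E ->
  measurable_fun setT (fun q => K (fun p => F (q, p))).
Proof.
elim: n d Q F => [|m IH] d Q F mF F0.
  exact: measurable_fun_pair1 mF.
pose F' := fun z : (Q * RR) * P m => F (z.1.1, ((z.1.2, z.2) : P m.+1)).
have mF' : measurable_fun setT F'.
  apply: measurableT_comp mF _; apply: measurable_fun_pair.
    exact: measurableT_comp measurable_fst measurable_fst.
  apply: measurable_fun_pair; last exact: measurable_snd.
  exact: measurableT_comp measurable_snd measurable_fst.
have := IH _ _ F' mF' (fun z => F0 _).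
set G := fun q => _ => mG.
have G0 z : (0 <= G z)%E by apply: K_ge0 => p; apply: F0.
have mG' : measurable_fun setT (G \_ (setT `*` D)).
  apply/(measurable_restrictT _ _).1 => //; first exact: measurableX mD.
  exact: measurable_funTS.
have Gp0 : forall z, (0 <= (G \_ (setT `*` D)) z)%E.
  by move=> z; rewrite /patch; case: ifP.
have := @measurable_fun_fubini_tonelli_F _ _ _ _ _ mu _ mG' Gp0.
apply: eq_measurable_fun => q _.
rewrite /fubini_F KS [RHS]integral_mkcond; apply: eq_integral => x _.
rewrite /patch /G /F' /=.
have -> : ((q, x) \in setT `*` D) = (x \in D).
  by apply/idP/idP; rewrite !inE /= => -[].
by [].
Qed.

Lemma Ksum n (I : Type) (s : seq I) (F : I -> P n -> \bar R) :
  (forall i, measurable_fun setT (F i)) -> (forall i p, 0 <= F i p)%E ->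
  K (fun p => \sum_(i <- s) F i p)%E = (\sum_(i <- s) K (F i))%E.
Proof.
elim: n F => [|m IH] F mF F0.
  by rewrite K0E; apply: eq_bigr => i _; rewrite K0E.
rewrite KS.
transitivity (\int[mu]_(x in D) \sum_(i <- s) K (fun p : P m => F i ((x, p) : P m.+1)))%E.
  apply: eq_integral => x _; apply: IH => [i|i p]; last exact: F0.
  exact: measurable_fun_pair2 (mF i).
rewrite ge0_integral_sum //.
- move=> i; apply: measurable_funTS.
  exact: (@Kmeas m _ RR (F i) (mF i) (F0 i)).
- by move=> i x _; apply: K_ge0 => p; apply: F0.
Qed.

Lemma swap (G : (RR * RR)%type -> \bar R) : measurable_fun setT G ->
  (forall z, 0 <= G z)%E ->
  (\int[mu]_(x in D) \int[mu]_(y in D) G (x, y) =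
   \int[mu]_(y in D) \int[mu]_(x in D) G (x, y))%E.
Proof.
move=> mG G0.
pose G' := G \_ (D `*` D).
have mG' : measurable_fun setT G'.
  apply/(measurable_restrictT _ _).1 => //; first exact: measurableX mD mD.
  exact: measurable_funTS.
have G'0 z : (0 <= G' z)%E by rewrite /G' /patch; case: ifP.
have memD x y : ((x, y) \in D `*` D) = (x \in D) && (y \in D).
  by apply/idP/andP; rewrite !inE /= => -[].
have := @fubini_tonelli _ _ _ _ _ mu mu G' mG' G'0.
have -> : (\int[mu]_(x in D) \int[mu]_(y in D) G (x, y) =
           \int[mu]_x \int[mu]_y G' (x, y))%E.
  rewrite [LHS]integral_mkcond.
  congr (integral _ _ _); apply/funext => x; rewrite /patch.
  case: ifPn => xD.
    rewrite integral_mkcond; apply: eq_integral => y _.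
    by rewrite /G' /patch memD xD.
  by rewrite integral0_eq // => y _; rewrite /G' /patch memD (negbTE xD).
move=> ->.
rewrite [RHS]integral_mkcond; apply: eq_integral => y _; rewrite /patch.
case: ifPn => yD.
  rewrite [RHS]integral_mkcond; apply: eq_integral => x _.
  by rewrite /G' /patch memD yD andbT.
by rewrite integral0_eq // => x _; rewrite /G' /patch memD (negbTE yD) andbF.
Qed.

Fixpoint snoc m : P m -> RR -> P m.+1 :=
  match m return P m -> RR -> P m.+1 with
  | 0 => fun _ x => ((x, tt) : P 1)
  | k.+1 => fun p x => ((p.1, snoc k p.2 x) : P k.+2)
  end.
Arguments snoc {m}.

Lemma msnoc m : measurable_fun setT (fun z : (P m * RR)%type => snoc z.1 z.2).
Proof.
elim: m => [|m IH] /=.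
  apply: measurable_fun_pair; first exact: measurable_snd.
  exact: measurable_cst.
apply: measurable_fun_pair.
  exact: measurableT_comp measurable_fst measurable_fst.
have h : measurable_fun setT (fun z : (P m.+1 * RR)%type => ((z.1.2 : P m), z.2)).
  apply: measurable_fun_pair; last exact: measurable_snd.
  exact: measurableT_comp measurable_snd measurable_fst.
exact: (measurableT_comp IH h).
Qed.

Lemma Ksnoc m (F : P m.+1 -> \bar R) : measurable_fun setT F ->
  (forall p, 0 <= F p)%E ->
  (\int[mu]_(x in D) K (fun p => F (snoc p x)))%E = K F.
Proof.
elim: m F => [|m IH] F mF F0; first by rewrite KS.
rewrite [RHS]KS.
transitivity (\int[mu]_(x in D) \int[mu]_(y in D)
   K (fun p : P m => F ((y, snoc p x) : P m.+2)))%E.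
  by apply: eq_integral => x _; rewrite KS.
pose G := fun z : (RR * RR)%type => K (fun p : P m => F ((z.2, snoc p z.1) : P m.+2)).
have G0 z : (0 <= G z)%E by apply: K_ge0 => p; apply: F0.
have mG : measurable_fun setT G.
  pose F'' := fun z : ((RR * RR) * P m)%type => F ((z.1.2, snoc z.2 z.1.1) : P m.+2).
  have : measurable_fun setT F''.
    apply: measurableT_comp mF _; apply: measurable_fun_pair.
      exact: measurableT_comp measurable_snd measurable_fst.
    have h : measurable_fun setT (fun z : ((RR * RR) * P m)%type => (z.2, z.1.1)).
      apply: measurable_fun_pair; first exact: measurable_snd.
      exact: measurableT_comp measurable_fst measurable_fst.
    exact: (measurableT_comp (msnoc m) h).
  move=> mF''; exact: (@Kmeas m _ _ F'' mF'' (fun z => F0 _)).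
have := @swap G mG G0; rewrite /G /= => ->.
apply: eq_integral => y _.
apply: (IH (fun q : P m.+1 => F ((y, q) : P m.+2))) => [|p]; last exact: F0.
exact: measurable_fun_pair2 mF.
Qed.

Definition rotP m (p : P m.+1) : P m.+1 := snoc (p.2 : P m) (p.1 : RR).
Arguments rotP {m}.

Lemma Krot m (F : P m.+1 -> \bar R) : measurable_fun setT F ->
  (forall p, 0 <= F p)%E -> K (fun p => F (rotP p)) = K F.
Proof. by move=> mF F0; rewrite KS -Ksnoc. Qed.

Lemma Kiint n (f : seq R -> \bar R) (F : P n -> \bar R) :
  (forall s, size s = n -> all (fun r => 0 < r) s -> f s = F (fl n s)) ->
  iint_pos n f = K F.
Proof.
elim: n f F => [|m IH] f F H; first by rewrite K0E /= H.
rewrite KS /=; apply: eq_integral => x xD.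
apply: IH => s ss sp; apply: H => /=; first by rewrite ss.
rewrite sp andbT.
by move: xD; rewrite inE /= in_itv /= andbT.
Qed.
Fixpoint tl n : P n -> seq R :=
  match n return P n -> seq R with
  | 0 => fun _ => [::]
  | m.+1 => fun p => (p.1 : R) :: tl m p.2
  end.
Arguments tl {n}.

Lemma tl_fl n s : size s = n -> tl (fl n s) = s.
Proof.
elim: n s => [|m IH] [|x s] //= [ss].
by rewrite IH.
Qed.

Lemma size_tl n (p : P n) : size (tl p) = n.
Proof. by elim: n p => [|m IH] p //=; rewrite IH. Qed.

Lemma tl_snoc m (p : P m) (x : RR) : tl (snoc p x) = rcons (tl p) x.
Proof. elim: m p => [|m IH] p //=; exact: (congr1 (cons p.1) (IH p.2)). Qed.

Lemma mcoord n i : measurable_fun setT (fun p : P n => nth 0 (tl p) i).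
Proof.
elim: n i => [|m IH] i /=; first by rewrite /= nth_nil; exact: measurable_cst.
case: i => [|i] /=; first exact: measurable_fst.
exact: (measurableT_comp (IH i) measurable_snd).
Qed.

Lemma nth_tl_rot m (p : P m.+1) (i : 'I_m.+1) :
  nth 0 (tl (rotP p)) i = nth 0 (tl p) (ordS i).
Proof.
rewrite /rotP tl_snoc /= nth_rcons size_tl.
case: i => i /= ilt.
have [im|] := ltnP i m.
  by rewrite modn_small.
move=> mi; have -> : i = m by apply/eqP; rewrite eqn_leq mi -ltnS ilt.
by rewrite eqxx modnn.
Qed.
Definition Pi n (j : 'I_n) (u : seq R) :=
  \prod_(i < n | i != j) (nth 0 u i + nth 0 u (i.+1 %% n)).
Arguments Pi {n}.
Definition E n (j : 'I_n) (u : seq R) := expR (- l1 n u - ln (2 * Pi j u)).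
Arguments E {n}.
Definition Gf n (j : 'I_n) (p : P n) : \bar R := (E j (tl p))%:E.
Arguments Gf {n}.

Lemma mGf n (j : 'I_n) : measurable_fun setT (Gf j).
Proof.
apply/measurable_EFinP.
have ms : measurable_fun setT (fun p : P n => l1 n (tl p)).
  by rewrite /l1; apply: measurable_sum => i; exact: mcoord.
have mp : measurable_fun setT (fun p : P n => 2 * Pi j (tl p)).
  apply: measurable_funM; first exact: measurable_cst.
  have : measurable_fun setT (fun p : P n => \prod_(i < n)
     (if i != j then nth 0 (tl p) i + nth 0 (tl p) (i.+1 %% n) else 1)).
    apply: measurable_prod => i _; case: (i != j) => /=.
      by apply: measurable_funD; exact: mcoord.
    exact: measurable_cst.
  move=> h; apply: eq_measurable_fun h => p _.
  by rewrite /Pi [RHS]big_mkcond.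
exact: (measurableT_comp (@measurable_expR R)
  (measurable_funB (measurable_funN ms) (measurableT_comp (@measurable_ln R) mp))).
Qed.

Lemma Gf_ge0 n (j : 'I_n) p : (0 <= Gf j p)%E.
Proof. by rewrite /Gf lee_fin expR_ge0. Qed.

Lemma Gf_rot m (j : 'I_m.+1) (p : P m.+1) : Gf j (rotP p) = Gf (ordS j) p.
Proof.
rewrite /Gf /E /l1 /Pi.
have h1 (i : 'I_m.+1) : nth 0 (tl (rotP p)) i = nth 0 (tl p) (ordS i).
  exact: nth_tl_rot.
have h2 (i : 'I_m.+1) : nth 0 (tl (rotP p)) (i.+1 %% m.+1) = nth 0 (tl p) (ordS (ordS i)).
  exact (@nth_tl_rot m p (ordS i)).
congr (expR (- _ - ln (2 * _)))%:E.
  under eq_bigr => i _ do rewrite h1.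
  by rewrite [RHS](reindex_inj (@ordS_inj m.+1)).
under eq_bigr => i _ do rewrite h1 h2.
rewrite [RHS](reindex_inj (@ordS_inj m.+1)).
by apply: eq_bigl => i; rewrite (inj_eq (@ordS_inj m.+1)).
Qed.
Lemma KGf0 m (j : 'I_m.+1) : K (Gf j) = K (Gf (ord0 : 'I_m.+1)).
Proof.
case: j => k hk.
elim: k hk => [|k IH] hk; first by congr (K (Gf _)); apply: val_inj.
have -> : Ordinal hk = ordS (Ordinal (ltnW hk)).
  by apply: val_inj => /=; rewrite modn_small.
rewrite -(IH (ltnW hk)) -(@Krot m (Gf (Ordinal (ltnW hk))) (@mGf m.+1 _) (@Gf_ge0 m.+1 _)).
by congr K; apply/funext => p; rewrite Gf_rot.
Qed.

Lemma Eform n (j : 'I_n) (u : seq R) :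
  (forall i, (i < n)%N -> 0 < nth 0 u i) ->
  E j u = expR (- l1 n u) / (2 * Pi j u).
Proof.
move=> hpos.
have Pi0 : 0 < 2 * Pi j u.
  rewrite mulr_gt0 // /Pi prodr_gt0 // => i _.
  by rewrite addr_gt0 // hpos // ltn_pmod // (leq_ltn_trans _ (ltn_ord i)).
by rewrite /E expRD (expRN (ln _)) lnK // posrE.
Qed.

Lemma decomp n (u : seq R) : (0 < n)%N ->
  (forall i, (i < n)%N -> 0 < nth 0 u i) ->
  l1 n u * expR (- l1 n u) / cyc_prod n u = \sum_(j < n) E j u.
Proof.
move=> n0 hpos.
pose a (j : 'I_n) := nth 0 u j + nth 0 u (j.+1 %% n).
have apos j : 0 < a j.
  by rewrite addr_gt0 // hpos // ltn_pmod.
have Pipos (j : 'I_n) : 0 < Pi j u by rewrite /Pi prodr_gt0 // => i _; have := apos i.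
have cycE (j : 'I_n) : cyc_prod n u = a j * Pi j u by rewrite /cyc_prod (bigD1 j).
have cyc0 : cyc_prod n u != 0.
  by rewrite (cycE (Ordinal n0)) mulf_neq0 // gt_eqF.
have hS : \sum_(j < n) nth 0 u (j.+1 %% n) = l1 n u.
  by rewrite /l1 [RHS](reindex_inj (@ordS_inj n)).
have Sa : \sum_(j < n) a j = 2 * l1 n u.
  rewrite big_split /= hS /l1; ring.
transitivity (\sum_(j < n) (expR (- l1 n u) / (2 * cyc_prod n u)) * a j).
  rewrite -mulr_sumr Sa; field; exact: cyc0.
apply: eq_bigr => j _; rewrite Eform // (cycE j); field.
by rewrite !gt_eqF ?Pipos ?apos.
Qed.

Lemma rhs_form m (u : seq R) :
  (forall i, (i < m.+1)%N -> 0 < nth 0 u i) ->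
  expR (- l1 m.+1 u) / path_prod m.+1 u =
  E (ord_max : 'I_m.+1) u + E (ord_max : 'I_m.+1) u.
Proof.
move=> hpos.
rewrite Eform //.
have -> : Pi (ord_max : 'I_m.+1) u = path_prod m.+1 u.
  rewrite /Pi /path_prod big_mkcond big_ord_recr /= eqxx mulr1.
  apply: eq_bigr => i _.
  have -> : (widen_ord (leqnSn m) i != ord_max) = true.
    by rewrite -val_eqE /= neq_ltn ltn_ord.
  by rewrite /= modn_small // ltnS.
have pp : 0 < path_prod m.+1 u.
  rewrite /path_prod prodr_gt0 // => i _.
  by rewrite addr_gt0 // hpos // ltnS // ltnW.
field; by rewrite gt_eqF.
Qed.
Lemma main_sec (n : nat) (hn : (2 <= n)%N) :
  iint_pos n (In_integrand (R:=R) n) =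
  ((n%:R / 2 : R)%:E * iint_pos n (rhs_integrand (R:=R) n))%E.
Proof.
case: n hn => [//|m] hm.
have hposof : forall s : seq R, size s = m.+1 -> all (fun r => 0 < r) s ->
    forall i, (i < m.+1)%N -> 0 < nth 0 s i.
  by move=> s ss sp i hi; apply: (all_nthP 0 sp); rewrite ss.
rewrite (@Kiint m.+1 _ (fun p => \sum_(j < m.+1) Gf j p)%E); last first.
  move=> s ss sp; rewrite /In_integrand.
  under eq_bigr do rewrite /Gf tl_fl //.
  by rewrite sumEFin decomp //; exact: hposof.
rewrite (@Kiint m.+1 _ (fun p => \sum_(j <- [:: ord_max; ord_max]) Gf (j : 'I_m.+1) p)%E); last first.
  move=> s ss sp; rewrite /rhs_integrand !big_cons big_nil adde0 /Gf tl_fl // -EFinD rhs_form //.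
  exact: hposof.
rewrite !Ksum; [| exact: mGf | exact: Gf_ge0 | by move=> i; exact: mGf
  | by move=> i p; exact: Gf_ge0].
under eq_bigr do rewrite KGf0.
rewrite !big_cons big_nil !KGf0 adde0.
have := @K_ge0 m.+1 (Gf ord0) (@Gf_ge0 m.+1 ord0).
move: (K (Gf ord0)) => x x0.
case: x x0 => [r|_|//] /=.
  move=> _; rewrite sumEFin -EFinD -EFinM sumr_const card_ord; congr EFin.
  by rewrite -mulr_natl; field.
rewrite addey // gt0_muley; last by rewrite lte_fin divr_gt0.
rewrite big_ord_recr /= addey //.
have : (0 <= \sum_(i < m) (+oo : \bar R))%E by apply: sume_ge0.
by case: (\sum_(i < m) _)%E.
Qed.

End Infra.

Theorem lemma4p27 (R : realType) (n : nat) (hn : (2 <= n)%N) :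
  iint_pos n (In_integrand (R:=R) n) =
  ((n%:R / 2 : R)%:E * iint_pos n (rhs_integrand (R:=R) n))%E.
Proof. exact: main_sec. Qed.
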